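(* Let $0<\kappa<1$, $\lambda=\sqrt{1-\kappa^2}$, and let $k\in(0,1)$ be defined by $k^2=\frac{1-\lambda}{1+\lambda}$ (so that $\kappa^2=\frac{4k^2}{(1+k^2)^2}$). For $\phi$ near $0$ define $$u(\phi)=\int_0^{\phi} F\!\left(\tfrac14,\tfrac34;\tfrac12;\kappa^2\sin^2\theta\right)\,\mathrm{d}\theta ,$$ let $u\mapsto\phi(u)$ be the local inverse near $0$ with $\phi(0)=0$, and set $s(u)=\sin\phi(u)$. Let $\mathrm{sn},\mathrm{dn}$ be the Jacobian elliptic functions of modulus $k$. Then $$s^2(u)=\mathrm{sn}^2\!\left[(1+k^2)^{-1/2}u\right]\Big\{k^2+\mathrm{dn}^2\!\left[(1+k^2)^{-1/2}u\right]\Big\}.$$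
   Context: $F(a,b;c;z)$ denotes the Gauss hypergeometric function ${}_2F_1(a,b;c;z)$. $\mathrm{sn},\mathrm{cn},\mathrm{dn}$ are the standard Jacobian elliptic functions of modulus $k$. The identity holds near $u=0$ (and hence for the meromorphic extension of $s^2$). *)

(* Defs.v *)
From Stdlib Require Import Reals Lra ClassicalEpsilon.
From Coquelicot Require Import Coquelicot.
Open Scope R_scope.

Fixpoint poch (a : R) (n : nat) : R :=
  match n with
  | O => 1
  | S m => poch a m * (a + INR m)
  end.

Definition hyp2F1 (a b c z : R) : R :=
  Series (fun n => poch a n * poch b n / (poch c n * INR (Factorial.fact n)) * z ^ n).

Definition EllF (k phi : R) : R :=
  RInt (fun t => / sqrt (1 - k ^ 2 * (sin t) ^ 2)) 0 phi.

(* Jacobi amplitude: the inverse of phi |-> F(phi,k) (a strictly increasing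
   bijection R -> R for 0 < k < 1). *)
Definition jam (k u : R) : R :=
  epsilon (inhabits 0) (fun phi => EllF k phi = u).

Definition jsn (k u : R) : R := sin (jam k u).
Definition jdn (k u : R) : R := sqrt (1 - k ^ 2 * (jsn k u) ^ 2).

Definition Ufun (kappa phi : R) : R :=
  RInt (fun t => hyp2F1 (1/4) (3/4) (1/2) (kappa ^ 2 * (sin t) ^ 2)) 0 phi.

(* Main.v *)
Require Import Defs.
From Stdlib Require Import Reals Lra Lia Factorial ClassicalEpsilon.
From Coquelicot Require Import Coquelicot.
Open Scope R_scope.

Definition cb (m : nat) : R := poch (1/2) m / INR (Factorial.fact m).

Lemma poch_pos a n : 0 < a -> 0 < poch a n.
Proof. intros Ha; induction n; simpl. lra. apply Rmult_lt_0_compat; auto. pose proof (pos_INR n); lra. Qed.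

Lemma cb_S n : cb (S n) = cb n * (1/2 + INR n) / INR (S n).
Proof.
  unfold cb. simpl poch. rewrite fact_simpl, mult_INR.
  pose proof (INR_fact_lt_0 n). pose proof (pos_INR n). rewrite S_INR. field. lra.
Qed.

Lemma cb_bnd n : 0 < cb n <= 1.
Proof.
  induction n. unfold cb; simpl; lra.
  rewrite cb_S, S_INR. pose proof (pos_INR n).
  split. apply Rdiv_lt_0_compat; [apply Rmult_lt_0_compat|]; lra.
  apply Rle_trans with (cb n); [|lra].
  apply Rmult_le_reg_r with (INR n + 1). lra.
  field_simplify; [|lra]. nra.
Qed.

Lemma rad_bnd (b : nat -> R) y : (forall n, Rabs (b n) <= 1) -> Rabs y < 1 ->
  Rbar_lt (Rabs y) (CV_radius b).
Proof.
  intros Hb Hy.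
  assert (H : Rbar_le (Finite ((1 + Rabs y)/2)) (CV_radius b)).
  { destruct (CV_radius_bounded b) as [Hub _]. apply Hub.
    exists 1. intros n. rewrite Rabs_mult, <- RPow_abs.
    assert (Hp : Rabs ((1 + Rabs y) / 2) ^ n <= 1).
    { apply Rle_trans with (1 ^ n); [|rewrite pow1; lra]. apply pow_incr. split. apply Rabs_pos.
      rewrite Rabs_pos_eq; pose proof (Rabs_pos y); lra. }
    pose proof (Hb n). pose proof (Rabs_pos (b n)).
    assert (0 <= Rabs ((1 + Rabs y) / 2) ^ n) by (apply pow_le, Rabs_pos). nra. }
  eapply Rbar_lt_le_trans; [|exact H]. simpl. lra.
Qed.

Lemma cb_abs n : Rabs (cb n) <= 1.
Proof. destruct (cb_bnd n). rewrite Rabs_pos_eq; lra. Qed.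

Lemma PSd n : PS_derive cb n = (1/2 + INR n) * cb n.
Proof. unfold PS_derive. rewrite cb_S. pose proof (pos_INR n). rewrite S_INR. field. lra. Qed.

Lemma rad_cb y : Rabs y < 1 -> Rbar_lt (Rabs y) (CV_radius cb).
Proof. intros; apply rad_bnd; auto; apply cb_abs. Qed.

Lemma ode y : Rabs y < 1 -> (1 - y) * PSeries (PS_derive cb) y = / 2 * PSeries cb y.
Proof.
  intros Hy.
  assert (E1 : ex_pseries (PS_derive cb) y) by (apply ex_pseries_derive, rad_cb; auto).
  assert (E2 : ex_pseries (PS_incr_1 (PS_derive cb)) y) by (apply ex_pseries_incr_1; auto).
  replace ((1 - y) * PSeries (PS_derive cb) y) with
    (PSeries (PS_derive cb) y - PSeries (PS_incr_1 (PS_derive cb)) y)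
    by (rewrite PSeries_incr_1; ring).
  rewrite <- PSeries_minus by auto. rewrite <- PSeries_scal.
  apply PSeries_ext. intros [|n]; unfold PS_minus, PS_scal, PS_incr_1; simpl;
    unfold plus, opp, scal, zero; simpl; unfold mult; simpl.
  - rewrite PSd. simpl. unfold cb; simpl. field.
  - rewrite !PSd, cb_S. rewrite S_INR. pose proof (pos_INR n). field. lra.
Qed.

Lemma binom y : Rabs y < 1 -> PSeries cb y = / sqrt (1 - y).
Proof.
  intros Hy.
  assert (Hd : forall x, Rabs x < 1 -> is_derive (fun x => PSeries cb x * sqrt (1 - x)) x 0).
  { intros x Hx. assert (0 < 1 - x) by (apply Rabs_def2 in Hx; lra).
    pose proof (sqrt_lt_R0 _ H) as Hs.
    assert (D2 : is_derive (fun x => sqrt (1 - x)) x (- / (2 * sqrt (1 - x)))).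
    { auto_derive. lra. unfold Rminus; ring. }
    pose proof (is_derive_mult (PSeries cb) (fun x => sqrt (1 - x)) x _ _
      (is_derive_PSeries cb x (rad_cb x Hx)) D2 (fun a b => Rmult_comm a b)) as D.
    match goal with |- is_derive _ _ ?z => match type of D with is_derive _ _ ?w => replace z with w; auto end end.
    unfold plus, mult; simpl. pose proof (ode x Hx).
    assert (sqrt (1 - x) * sqrt (1 - x) = 1 - x) by (apply sqrt_sqrt; lra).
    apply Rmult_eq_reg_r with (2 * sqrt (1 - x)); [|lra].
    rewrite Rmult_0_l. set (s := sqrt (1 - x)) in *. rewrite <- H1 in H0.
    set (P := PSeries cb x) in *. set (P' := PSeries (PS_derive cb) x) in *.
    assert (E : (P' * s + P * - / (2 * s)) * (2 * s) = 2 * (s * s * P') - P) by (field; lra).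
    rewrite E, H0. field. }
  destruct (MVT_gen (fun x => PSeries cb x * sqrt (1 - x)) 0 y (fun _ => 0)) as [c [Hc Hm]].
  { intros x Hx. apply Hd. apply Rabs_def1; destruct Hx as [H1 H2];
    apply Rabs_def2 in Hy; unfold Rmin, Rmax in *; destruct Rle_dec; lra. }
  { intros x Hx. apply continuity_pt_filterlim. apply (ex_derive_continuous (fun x => PSeries cb x * sqrt (1 - x))).
    eexists. apply Hd. apply Rabs_def1; destruct Hx as [H1 H2];
    apply Rabs_def2 in Hy; unfold Rmin, Rmax in *; destruct Rle_dec; lra. }
  rewrite PSeries_0, Rminus_0_r, sqrt_1 in Hm. replace (cb 0) with 1 in Hm by (unfold cb; simpl; field).
  assert (0 < sqrt (1 - y)) by (apply sqrt_lt_R0; apply Rabs_def2 in Hy; lra).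
  apply Rmult_eq_reg_r with (sqrt (1 - y)); [|lra]. rewrite Rinv_l by lra. lra.
Qed.

Lemma poch_S a m : poch a (S m) = poch a m * (a + INR m).
Proof. reflexivity. Qed.

Lemma coefQ n : poch (1/4) n * poch (3/4) n * INR (Factorial.fact (2*n)) =
  poch (1/2) (2*n) * poch (1/2) n * INR (Factorial.fact n).
Proof.
  induction n. simpl. ring.
  replace (2 * S n)%nat with (S (S (2*n))) by lia.
  rewrite !poch_S, !fact_simpl, !mult_INR, !S_INR, mult_INR.
  set (A := poch (1/4) n) in *. set (B := poch (3/4) n) in *.
  set (F := INR (Factorial.fact (2 * n))) in *. set (P := poch (1/2) (2*n)) in *.
  set (Q := poch (1/2) n) in *. set (G := INR (Factorial.fact n)) in *.
  replace (INR 2) with 2 by (simpl; ring).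
  apply Rminus_diag_uniq.
  transitivity ((A*B*F - P*Q*G) * ((1/4+INR n)*(3/4+INR n)*(2*INR n+2)*(2*INR n+1))).
  change (INR 0) with 0. clearbody A B F P Q G. field. rewrite IHn. field.
Qed.

Lemma coef n : poch (1/4) n * poch (3/4) n / (poch (1/2) n * INR (Factorial.fact n)) = cb (2*n).
Proof.
  unfold cb. pose proof (coefQ n). pose proof (INR_fact_lt_0 n). pose proof (INR_fact_lt_0 (2*n)).
  assert (0 < poch (1/2) n) by (apply poch_pos; lra).
  field_simplify_eq; [|repeat split; lra]. rewrite H. ring.
Qed.

Definition hh (x : R) : R := / 2 * (/ sqrt (1 + x) + / sqrt (1 - x)).

Lemma hyp_closed x : Rabs x < 1 -> hyp2F1 (1/4) (3/4) (1/2) (x ^ 2) = hh x.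
Proof.
  intros Hx.
  assert (Hx2 : Rabs (x^2) < 1).
  { rewrite <- RPow_abs. pose proof (Rabs_pos x). simpl. nra. }
  assert (Hm : Rabs (-x) < 1) by (rewrite Rabs_Ropp; auto).
  assert (HE : hyp2F1 (1/4) (3/4) (1/2) (x ^ 2) = PSeries (fun n => cb (2*n)) (x^2)).
  { unfold hyp2F1, PSeries. apply Series_ext. intros n. rewrite coef. reflexivity. }
  assert (Ee : ex_pseries (fun n => cb (2*n)) (x^2)).
  { apply CV_radius_inside, rad_bnd; auto. intros; apply cb_abs. }
  assert (Eo : ex_pseries (fun n => cb (2*n+1)) (x^2)).
  { apply CV_radius_inside, rad_bnd; auto. intros; apply cb_abs. }
  pose proof (PSeries_odd_even cb x Ee Eo) as H1.
  pose proof (PSeries_odd_even cb (-x)) as H2.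
  replace ((-x)^2) with (x^2) in H2 by ring. specialize (H2 Ee Eo).
  rewrite binom in H1, H2 by auto. unfold hh. rewrite HE.
  replace (1 - - x) with (1 + x) in H2 by ring. lra.
Qed.

Lemma IntD (f : R -> R) y : (forall t, continuous f t) ->
  is_derive (fun y => RInt f 0 y) y (f y).
Proof.
  intros Hc. apply (is_derive_RInt f (fun y => RInt f 0 y) 0 y); auto.
  apply filter_forall. intros b. exact (RInt_correct f 0 b (ex_RInt_continuous f 0 b (fun z _ => Hc z))).
Qed.

Lemma IntMVT (f : R -> R) y : (forall t, continuous f t) ->
  exists c, Rmin 0 y <= c <= Rmax 0 y /\ RInt f 0 y = f c * y.
Proof.
  intros Hc.
  destruct (MVT_gen (fun y => RInt f 0 y) 0 y f) as [c [H1 H2]].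
  - intros; apply IntD; auto.
  - intros x _. apply continuity_pt_filterlim.
    apply (ex_derive_continuous (fun y => RInt f 0 y)). eexists; apply IntD; auto.
  - exists c; split; auto. rewrite RInt_point in H2. unfold zero in H2; simpl in H2. lra.
Qed.

Lemma IntInj (f : R -> R) x y : (forall t, continuous f t) -> (forall t, 0 < f t) ->
  RInt f 0 x = RInt f 0 y -> x = y.
Proof.
  intros Hc Hp E.
  destruct (MVT_gen (fun y => RInt f 0 y) x y f) as [c [H1 H2]].
  - intros; apply IntD; auto.
  - intros z _. apply continuity_pt_filterlim.
    apply (ex_derive_continuous (fun y => RInt f 0 y)). eexists; apply IntD; auto.
  - rewrite E in H2. specialize (Hp c).
    assert (f c * (y - x) = 0) by lra. apply Rmult_integral in H. lra.
Qed.

Lemma sqrt_eq X Y : 0 <= Y -> Y * Y = X -> sqrt X = Y.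
Proof. intros H E; subst; apply sqrt_square; auto. Qed.

Definition Ef (k t : R) : R := / sqrt (1 - k ^ 2 * (sin t) ^ 2).

Lemma Ef_pos k t : 0 < k < 1 -> 0 < 1 - k ^ 2 * (sin t) ^ 2.
Proof.
  intros Hk. pose proof (SIN_bound t).
  assert (0 <= (1 - sin t)*(1+sin t)) by (apply Rmult_le_pos; lra).
  assert ((sin t)^2 <= 1) by (replace ((sin t)^2) with (1 - (1 - sin t)*(1+sin t)) by ring; lra).
  assert (k^2 < 1) by nra. assert (0 <= k^2) by nra.
  assert (k^2 * (sin t)^2 <= k^2 * 1) by (apply Rmult_le_compat_l; auto). lra.
Qed.

Lemma Ef_cont k t : 0 < k < 1 -> continuous (Ef k) t.
Proof.
  intros Hk. apply (ex_derive_continuous (Ef k)). unfold Ef. auto_derive.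
  pose proof (Ef_pos k t Hk). split; [lra|]. split; auto.
  apply Rgt_not_eq, sqrt_lt_R0; auto.
Qed.

Lemma Ef_ge1 k t : 0 < k < 1 -> 1 <= Ef k t.
Proof.
  intros Hk. unfold Ef. pose proof (Ef_pos k t Hk).
  assert (sqrt (1 - k ^ 2 * sin t ^ 2) <= 1).
  { assert (0 <= k^2 * sin t ^2) by (apply Rmult_le_pos; apply pow2_ge_0). apply Rle_trans with (sqrt 1); [apply sqrt_le_1; lra | rewrite sqrt_1; lra]. }
  pose proof (sqrt_lt_R0 _ H).
  apply Rle_trans with (/ 1); [rewrite Rinv_1; lra | apply Rinv_le_contravar; lra].
Qed.

Lemma EllF_eq k : EllF k = fun phi => RInt (Ef k) 0 phi.
Proof. reflexivity. Qed.

Lemma EllF_abs k a : 0 < k < 1 -> Rabs a <= Rabs (EllF k a).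
Proof.
  intros Hk. rewrite EllF_eq.
  destruct (IntMVT (Ef k) a) as [c [_ E]]. intros; apply Ef_cont; auto.
  rewrite E, Rabs_mult. pose proof (Ef_ge1 k c Hk). rewrite (Rabs_pos_eq (Ef k c)) by lra.
  pose proof (Rabs_pos a). nra.
Qed.

Lemma jam_spec k v : 0 < k < 1 -> EllF k (jam k v) = v.
Proof.
  intros Hk. unfold jam. apply epsilon_spec.
  assert (Hc : continuity (EllF k)).
  { intros x. apply continuity_pt_filterlim. rewrite EllF_eq.
    apply (ex_derive_continuous (fun y => RInt (Ef k) 0 y)). eexists; apply IntD.
    intros; apply Ef_cont; auto. }
  assert (Hs : forall a, 0 <= a -> a <= EllF k a /\ EllF k (-a) <= -a).
  { intros a Ha. rewrite EllF_eq.
    destruct (IntMVT (Ef k) a) as [c [_ E]]. intros; apply Ef_cont; auto.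
    destruct (IntMVT (Ef k) (-a)) as [c' [_ E']]. intros; apply Ef_cont; auto.
    rewrite E, E'. pose proof (Ef_ge1 k c Hk). pose proof (Ef_ge1 k c' Hk). split; nra. }
  destruct (Hs (Rabs v) (Rabs_pos v)) as [H1 H2].
  destruct (IVT_gen (EllF k) (- Rabs v) (Rabs v) v Hc) as [x [_ Hx]].
  - unfold Rmin, Rmax; destruct Rle_dec; split; unfold Rabs in *; destruct Rcase_abs; lra.
  - exists x; auto.
Qed.

Definition HH kappa t := hh (kappa * sin t).

Lemma ks_bnd kappa t : 0 < kappa < 1 -> Rabs (kappa * sin t) < 1.
Proof.
  intros Hk. rewrite Rabs_mult, Rabs_pos_eq by lra.
  pose proof (Rabs_le_between' (sin t) 0 1). pose proof (SIN_bound t).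
  assert (Rabs (sin t) <= 1) by (apply Rabs_le; lra). pose proof (Rabs_pos (sin t)). nra.
Qed.

Lemma HH_cont kappa t : 0 < kappa < 1 -> continuous (HH kappa) t.
Proof.
  intros Hk. apply (ex_derive_continuous (HH kappa)). unfold HH, hh.
  pose proof (ks_bnd kappa t Hk) as Hb. apply Rabs_def2 in Hb.
  auto_derive. repeat split; try lra; apply Rgt_not_eq, sqrt_lt_R0; lra.
Qed.

Lemma HH_pos kappa t : 0 < kappa < 1 -> 0 < HH kappa t.
Proof.
  intros Hk. unfold HH, hh. pose proof (ks_bnd kappa t Hk) as Hb. apply Rabs_def2 in Hb.
  assert (0 < / sqrt (1 + kappa * sin t)) by (apply Rinv_0_lt_compat, sqrt_lt_R0; lra).
  assert (0 < / sqrt (1 - kappa * sin t)) by (apply Rinv_0_lt_compat, sqrt_lt_R0; lra).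
  lra.
Qed.

Lemma Ufun_eq kappa phi : 0 < kappa < 1 -> Ufun kappa phi = RInt (HH kappa) 0 phi.
Proof.
  intros Hk. unfold Ufun. apply RInt_ext. intros x _.
  rewrite <- Rpow_mult_distr. apply hyp_closed, ks_bnd; auto.
Qed.

Lemma is_derive_eq (f : R -> R) x d d' : is_derive f x d -> d = d' -> is_derive f x d'.
Proof. intros H E; subst; auto. Qed.

Definition sig k a := sin a * sqrt (1 + k ^ 2 * cos a ^ 2).

Lemma sig_facts k a : 0 < k < 1 -> Rabs a < 1 ->
  0 < cos a /\ 1 - sig k a * sig k a = (cos a * sqrt (1 - k ^ 2 * sin a ^ 2)) ^ 2.
Proof.
  intros Hk Ha. apply Rabs_def2 in Ha. pose proof PI2_1.
  split. apply cos_gt_0; lra.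
  unfold sig. pose proof (Ef_pos k a Hk).
  assert (0 <= k^2 * cos a ^2) by (apply Rmult_le_pos; apply pow2_ge_0).
  rewrite Rpow_mult_distr, pow2_sqrt by lra.
  replace (sin a * sqrt (1 + k ^ 2 * cos a ^ 2) * (sin a * sqrt (1 + k ^ 2 * cos a ^ 2)))
    with (sin a ^ 2 * (sqrt (1 + k ^ 2 * cos a ^ 2) * sqrt (1 + k ^ 2 * cos a ^ 2))) by ring.
  rewrite sqrt_sqrt by lra. pose proof (sin2_cos2 a). unfold Rsqr in H2.
  replace (cos a ^ 2) with (1 - sin a ^2) by (simpl; lra). ring.
Qed.

Lemma key k a : 0 < k < 1 -> Rabs a < 1 ->
  is_derive (fun a => RInt (HH (2 * k / (1 + k ^ 2))) 0 (asin (sig k a))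
                      - sqrt (1 + k ^ 2) * EllF k a) a 0.
Proof.
  intros Hk Ha.
  set (kappa := 2 * k / (1 + k ^ 2)).
  assert (Hkap : 0 < kappa < 1).
  { unfold kappa. split. apply Rdiv_lt_0_compat; nra.
    apply Rmult_lt_reg_r with (1 + k^2). nra. field_simplify; nra. }
  destruct (sig_facts k a Hk Ha) as [HC Hsig].
  set (S := sin a) in *. set (C := cos a) in *.
  set (W := sqrt (1 + k ^ 2 * C ^ 2)).
  set (D := sqrt (1 - k ^ 2 * S ^ 2)) in *.
  set (s2 := sqrt (1 + k ^ 2)).
  assert (HW : 0 < W) by (apply sqrt_lt_R0; pose proof (pow2_ge_0 (k*C)); rewrite Rpow_mult_distr in *; lra).
  assert (HW2 : W * W = 1 + k ^ 2 * C ^ 2) by (apply sqrt_sqrt; pose proof (pow2_ge_0 (k*C)); rewrite Rpow_mult_distr in *; lra).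
  assert (HD : 0 < D) by (apply sqrt_lt_R0, Ef_pos; auto).
  assert (Hs2 : 0 < s2) by (apply sqrt_lt_R0; nra).
  assert (Hs22 : s2 * s2 = 1 + k ^ 2) by (apply sqrt_sqrt; nra).
  assert (HSC : S ^ 2 + C ^ 2 = 1) by (pose proof (sin2_cos2 a); unfold Rsqr in *; simpl; unfold S, C; lra).
  assert (HS1 : -1 <= S <= 1) by apply SIN_bound.
  assert (HW1 : 1 <= W) by nra.
  assert (Dsig : is_derive (sig k) a (C * W - k ^ 2 * C * S ^ 2 / W)).
  { unfold sig. auto_derive.
    - pose proof (pow2_ge_0 (k * cos a)). rewrite Rpow_mult_distr in H. lra.
    - fold S C. replace (1 + k*(k*1)*(C*(C*1))) with (1 + k^2*C^2) by ring. fold W. field. lra. }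
  assert (Hsq : sqrt (1 - Rsqr (sig k a)) = C * D).
  { apply sqrt_eq. apply Rmult_le_pos; lra. unfold Rsqr. rewrite Hsig. fold S D. simpl; ring. }
  assert (Hsb : -1 < sig k a < 1).
  { assert (0 < (C * D) ^ 2) by (apply pow_lt; nra). 
    assert (sig k a * sig k a < 1) by lra.
    split; destruct (Rlt_le_dec (-1) (sig k a)); try destruct (Rlt_le_dec (sig k a) 1); try lra; nra. }
  assert (Dasin : is_derive asin (sig k a) (1 / (C * D))).
  { apply is_derive_Reals. rewrite <- Hsq. apply derive_pt_eq_1 with (derivable_pt_asin _ Hsb).
    apply derive_pt_asin. }
  assert (Dpsi := is_derive_comp asin (sig k) a _ _ Dasin Dsig).
  assert (DI := is_derive_comp (fun y => RInt (HH kappa) 0 y) (fun a => asin (sig k a)) a _ _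
            (IntD (HH kappa) (asin (sig k a)) (fun t => HH_cont kappa t Hkap)) Dpsi).
  assert (DE : is_derive (EllF k) a (Ef k a)).
  { rewrite EllF_eq. apply IntD. intros; apply Ef_cont; auto. }
  pose proof (is_derive_minus _ _ a _ _ DI (is_derive_scal _ a (sqrt (1 + k^2)) _ DE)) as DD.
  apply (is_derive_eq _ _ _ _ DD).
  unfold HH, hh, Ef, scal, minus, plus, opp, mult; simpl. unfold mult; simpl.
  rewrite sin_asin by lra. fold S D s2.
  assert (Hs2' : s2 ^ 2 = 1 + k ^ 2) by (rewrite <- Hs22; ring).
  assert (HW2' : W ^ 2 = 1 + k ^ 2 - k ^ 2 * S ^ 2) by (replace (W^2) with (W*W) by ring; rewrite HW2; replace (C^2) with (1 - S^2) by lra; ring).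
  assert (HkS : -k <= k * S <= k) by (split; nra).
  assert (E1 : sqrt (1 + kappa * sig k a) = (W + k * S) / s2).
  { apply sqrt_eq. apply Rdiv_le_0_compat; nra.
    unfold kappa, sig. fold S C W. field_simplify_eq; [|nra]. rewrite Hs2', HW2'. ring. }
  assert (E2 : sqrt (1 - kappa * sig k a) = (W - k * S) / s2).
  { apply sqrt_eq. apply Rdiv_le_0_compat; nra.
    unfold kappa, sig. fold S C W. field_simplify_eq; [|nra]. rewrite Hs2', HW2'. ring. }
  rewrite E1, E2.
  replace (sqrt (1 + k * (k * 1))) with s2 by (unfold s2; f_equal; ring).
  replace (sqrt (1 - k * (k * 1) * (S * (S * 1)))) with D by (unfold D; f_equal; ring).
  field. repeat split; try lra; nra.
Qed.

Lemma const0 (G : R -> R) a : (forall x, Rabs x < 1 -> is_derive G x 0) -> Rabs a < 1 -> G a = G 0.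
Proof.
  intros Hd Ha. apply Rabs_def2 in Ha.
  destruct (MVT_gen G 0 a (fun _ => 0)) as [c [_ Hm]].
  - intros x Hx. apply Hd. apply Rabs_def1; unfold Rmin, Rmax in *; destruct Rle_dec; lra.
  - intros x Hx. apply continuity_pt_filterlim. apply (ex_derive_continuous G).
    eexists; apply Hd. apply Rabs_def1; unfold Rmin, Rmax in *; destruct Rle_dec; lra.
  - lra.
Qed.

Theorem theorem9 (kappa lambda k : R) :
  0 < kappa < 1 ->
  lambda = sqrt (1 - kappa ^ 2) ->
  0 < k < 1 ->
  k ^ 2 = (1 - lambda) / (1 + lambda) ->
  exists delta : R, 0 < delta /\
    forall phi : R -> R,
      phi 0 = 0 ->
      (forall u, Rabs u < delta -> Ufun kappa (phi u) = u) ->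
      forall u, Rabs u < delta ->
        (sin (phi u)) ^ 2 =
          (jsn k (u / sqrt (1 + k ^ 2))) ^ 2 *
          (k ^ 2 + (jdn k (u / sqrt (1 + k ^ 2))) ^ 2).
Proof.
  intros Hkap Hlam Hk Hk2.
  assert (Hl2 : lambda * lambda = 1 - kappa ^ 2) by (subst; apply sqrt_sqrt; nra).
  assert (Hl0 : 0 <= lambda) by (subst; apply sqrt_pos).
  assert (Hl : lambda = (1 - k^2) / (1 + k^2)).
  { rewrite Hk2. field. lra. }
  assert (Hkv : kappa = 2 * k / (1 + k ^ 2)).
  { assert (Hq : (kappa * (1 + k^2)) ^ 2 = (2 * k) ^ 2).
    { replace ((kappa*(1+k^2))^2) with ((1 - lambda*lambda) * (1+k^2)^2) by (rewrite Hl2; ring).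
      rewrite Hl. field. nra. }
    assert (0 < kappa * (1 + k^2)) by nra.
    assert (Hz : (kappa * (1 + k^2) - 2 * k) * (kappa * (1 + k^2) + 2 * k) = 0).
    { replace ((kappa * (1 + k^2) - 2 * k) * (kappa * (1 + k^2) + 2 * k)) with
        ((kappa*(1+k^2))^2 - (2*k)^2) by ring. rewrite Hq; ring. }
    apply Rmult_integral in Hz. destruct Hz as [Hz|Hz]; [|nra].
    apply Rmult_eq_reg_r with (1 + k^2); [|nra]. unfold Rdiv. rewrite Rmult_assoc, Rinv_l by nra. lra. }
  exists 1. split. lra.
  intros phi _ Hphi u Hu.
  set (s2 := sqrt (1 + k ^ 2)).
  assert (Hs2 : 1 <= s2).
  { unfold s2. rewrite <- sqrt_1 at 1. apply sqrt_le_1; nra. }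
  set (v := u / s2).
  assert (Hv : Rabs v <= Rabs u).
  { unfold v, Rdiv. rewrite Rabs_mult, Rabs_inv, (Rabs_pos_eq s2) by lra.
    pose proof (Rabs_pos u). assert (/ s2 <= 1).
    { apply Rle_trans with (/1); [apply Rinv_le_contravar; lra| rewrite Rinv_1; lra]. }
    nra. }
  set (a := jam k v).
  assert (Hav : EllF k a = v) by (apply jam_spec; auto).
  assert (Ha : Rabs a < 1) by (pose proof (EllF_abs k a Hk); rewrite Hav in H; lra).
  assert (Hkap' : 0 < 2 * k / (1 + k ^ 2) < 1) by (rewrite <- Hkv; auto).
  pose proof (const0 _ a (fun x Hx => key k x Hk Hx) Ha) as HG. cbv beta in HG.
  assert (G0 : sig k 0 = 0) by (unfold sig; rewrite sin_0; ring). rewrite G0, asin_0 in HG.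
  assert (E0 : EllF k 0 = 0) by (unfold EllF; rewrite RInt_point; reflexivity).
  assert (I0 : RInt (HH (2 * k / (1 + k ^ 2))) 0 0 = 0) by (rewrite RInt_point; reflexivity).
  rewrite E0, I0, Hav in HG.
  rewrite <- Hkv in HG.
  assert (HI : RInt (HH kappa) 0 (asin (sig k a)) = u) by (unfold v in HG; fold s2 in HG; field_simplify in HG; lra).
  assert (Hp : phi u = asin (sig k a)).
  { apply (IntInj (HH kappa)). intros; apply HH_cont; auto. intros; apply HH_pos; auto.
    rewrite HI, <- Ufun_eq by auto. apply Hphi; auto. }
  destruct (sig_facts k a Hk Ha) as [HC Hsig].
  assert (Hsb : -1 <= sig k a <= 1).
  { assert (0 <= (cos a * sqrt (1 - k ^ 2 * sin a ^ 2)) ^ 2) by apply pow2_ge_0.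
    assert (sig k a * sig k a <= 1) by lra.
    split; destruct (Rle_dec (-1) (sig k a)); try destruct (Rle_dec (sig k a) 1); try lra; nra. }
  rewrite Hp, sin_asin by auto.
  unfold jsn, jdn. fold s2 v a.
  rewrite pow2_sqrt by (apply Rlt_le, Ef_pos; auto).
  unfold sig. rewrite Rpow_mult_distr, pow2_sqrt by (pose proof (pow2_ge_0 (k * cos a)); rewrite Rpow_mult_distr in H; lra).
  pose proof (sin2_cos2 a). unfold Rsqr in H.
  replace (cos a ^ 2) with (1 - sin a ^ 2) by (simpl; lra). change (jsn k v) with (sin a). ring.
Qed.
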